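(* Let $\bm{A}\in\mathbb{R}^{d\times K}$ with $K\le d$, let $g(\bm{Q})=\langle\bm{A},\bm{Q}\rangle+\delta_{{\rm St}(d,K)}(\bm{Q})$, and define $R:{\rm St}(d,K)\to\mathbb{R}^{d\times K}$ by $R(\bm{Q})=\bm{A}-\bm{Q}\bm{A}^T\bm{Q}$. Then for every $\bm{Q}\in{\rm St}(d,K)$, $$\operatorname{dist}(\bm{0},\partial g(\bm{Q}))=\Big\|\Big(\bm{I}_d-\tfrac12\bm{Q}\bm{Q}^T\Big)R(\bm{Q})\Big\|_F\quad\text{and}\quad\tfrac12\|R(\bm{Q})\|_F\le\operatorname{dist}(\bm{0},\partial g(\bm{Q}))\le\|R(\bm{Q})\|_F.$$ In particular, $\bm{Q}$ is a limiting critical point of $g$ (i.e. $\bm{0}\in\partial g(\bm{Q})$) if and only if $\bm{Q}\in{\rm St}(d,K)$ and $R(\bm{Q})=\bm{0}$.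
   Context: ${\rm St}(d,K)=\{\bm{Q}\in\mathbb{R}^{d\times K}:\bm{Q}^T\bm{Q}=\bm{I}_K\}$; $\langle\bm{A},\bm{B}\rangle=\operatorname{tr}(\bm{A}^T\bm{B})$; $\delta_{\mathcal{S}}$ is the indicator function of $\mathcal{S}$; $\partial$ denotes the limiting subdifferential; $\operatorname{dist}(\bm{0},S)=\inf_{\bm{s}\in S}\|\bm{s}\|_F$. *)

(* Defs.v *)
From HB Require Import structures.
From mathcomp Require Import all_boot all_order all_algebra.
From mathcomp Require Import all_classical all_reals all_analysis.
Set Implicit Arguments. Unset Strict Implicit. Unset Printing Implicit Defensive.
Import Order.TTheory GRing.Theory Num.Theory numFieldNormedType.Exports.
Local Open Scope classical_set_scope.
Local Open Scope ring_scope.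

Section Defs.
Variable R : realType.

Definition mxdot m n (A B : 'M[R]_(m, n)) : R := \tr (A^T *m B).

Definition frob m n (A : 'M[R]_(m, n)) : R :=
  Num.sqrt (\sum_(i < m) \sum_(j < n) A i j ^+ 2).

Definition stiefel d K : set 'M[R]_(d, K) := [set Q | Q^T *m Q = 1%:M].

Definition indic (T : Type) (S : set T) (x : T) : \bar R :=
  if `[< S x >] then 0%E else +oo%E.

Definition gfun d K (A : 'M[R]_(d, K)) (Q : 'M[R]_(d, K)) : \bar R :=
  ((mxdot A Q)%:E + indic (@stiefel d K) Q)%E.

(* Frechet (regular) subdifferential, liminf definition written with eps/delta. *)
Definition frechet_subdiff m n (f : 'M[R]_(m, n) -> \bar R) (X : 'M[R]_(m, n))
  : set 'M[R]_(m, n) :=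
  [set V | f X \is a fin_num /\
     forall e : R, 0 < e -> exists2 delta : R, 0 < delta &
       forall Y, frob (Y - X) < delta ->
         ((fine (f X) + mxdot V (Y - X) - e * frob (Y - X))%:E <= f Y)%E].

Definition limiting_subdiff m n (f : 'M[R]_(m, n) -> \bar R) (X : 'M[R]_(m, n))
  : set 'M[R]_(m, n) :=
  [set V | f X \is a fin_num /\
     exists (Xs Vs : nat -> 'M[R]_(m, n)),
       (forall k, frechet_subdiff f (Xs k) (Vs k)) /\
       (fun k => frob (Xs k - X)) @ \oo --> 0%R /\
       (fun k => f (Xs k)) @ \oo --> f X /\
       (fun k => frob (Vs k - V)) @ \oo --> 0%R].

(* dist(0, S) = inf_{s in S} ||s||_F  (= +oo for empty S). *)
Definition dist0 m n (S : set 'M[R]_(m, n)) : \bar R :=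
  ereal_inf [set (frob V)%:E | V in S].

End Defs.

(* Main.v *)
Require Import Defs.
Set Warnings "-all".
From HB Require Import structures.
From mathcomp Require Import all_boot all_order all_algebra.
From mathcomp Require Import all_classical all_reals all_analysis.
From mathcomp Require Import ring lra.
Import Order.TTheory GRing.Theory Num.Theory numFieldNormedType.Exports.
Local Open Scope classical_set_scope.
Local Open Scope ring_scope.
Set Implicit Arguments. Unset Strict Implicit.
Section Basics.
Variable R : realType.

Definition ss m n (X : 'M[R]_(m,n)) := \sum_i \sum_j X i j ^+ 2.

Lemma mxdotE m n (X Y : 'M[R]_(m,n)) : mxdot X Y = \sum_i \sum_j X i j * Y i j.
Proof.
rewrite /mxdot /mxtrace.
under eq_bigr do rewrite mxE.
under eq_bigr do under eq_bigr do rewrite mxE.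
by rewrite exchange_big.
Qed.

Lemma mxdotC m n (X Y : 'M[R]_(m,n)) : mxdot X Y = mxdot Y X.
Proof. rewrite !mxdotE; apply eq_bigr => i _; apply eq_bigr => j _; exact: mulrC. Qed.

Lemma mxdotDl m n (X Y Z : 'M[R]_(m,n)) : mxdot (X + Y) Z = mxdot X Z + mxdot Y Z.
Proof. rewrite !mxdotE -big_split; apply eq_bigr => i _; rewrite -big_split;
  apply eq_bigr => j _; by rewrite !mxE mulrDl. Qed.

Lemma mxdotZl m n c (X Z : 'M[R]_(m,n)) : mxdot (c *: X) Z = c * mxdot X Z.
Proof. rewrite !mxdotE mulr_sumr; apply eq_bigr => i _; rewrite mulr_sumr;
  apply eq_bigr => j _; by rewrite !mxE mulrA. Qed.

Lemma mxdotNl m n (X Z : 'M[R]_(m,n)) : mxdot (- X) Z = - mxdot X Z.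
Proof. by rewrite -scaleN1r mxdotZl mulN1r. Qed.

Lemma mxdotBl m n (X Y Z : 'M[R]_(m,n)) : mxdot (X - Y) Z = mxdot X Z - mxdot Y Z.
Proof. by rewrite mxdotDl mxdotNl. Qed.

Lemma mxdotDr m n (X Y Z : 'M[R]_(m,n)) : mxdot Z (X + Y) = mxdot Z X + mxdot Z Y.
Proof. by rewrite mxdotC mxdotDl !(mxdotC Z). Qed.
Lemma mxdotZr m n c (X Z : 'M[R]_(m,n)) : mxdot Z (c *: X) = c * mxdot Z X.
Proof. by rewrite mxdotC mxdotZl !(mxdotC Z). Qed.
Lemma mxdotNr m n (X Z : 'M[R]_(m,n)) : mxdot Z (- X) = - mxdot Z X.
Proof. by rewrite mxdotC mxdotNl !(mxdotC Z). Qed.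
Lemma mxdotBr m n (X Y Z : 'M[R]_(m,n)) : mxdot Z (X - Y) = mxdot Z X - mxdot Z Y.
Proof. by rewrite mxdotDr mxdotNr. Qed.
Lemma mxdot0r m n (Z : 'M[R]_(m,n)) : mxdot Z 0 = 0.
Proof. by rewrite /mxdot mulmx0 linear0. Qed.

Lemma ssE m n (X : 'M[R]_(m,n)) : ss X = mxdot X X.
Proof. by rewrite mxdotE; apply eq_bigr => i _; apply eq_bigr => j _; rewrite expr2. Qed.

Lemma ss_ge0 m n (X : 'M[R]_(m,n)) : 0 <= ss X.
Proof. by apply: sumr_ge0 => i _; apply: sumr_ge0 => j _; exact: sqr_ge0. Qed.

Lemma frobE m n (X : 'M[R]_(m,n)) : frob X = Num.sqrt (ss X).
Proof. by []. Qed.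

Lemma frob_ge0 m n (X : 'M[R]_(m,n)) : 0 <= frob X.
Proof. exact: sqrtr_ge0. Qed.

Lemma frob2 m n (X : 'M[R]_(m,n)) : frob X ^+ 2 = mxdot X X.
Proof. by rewrite frobE sqr_sqrtr ?ss_ge0 // ssE. Qed.

Lemma entry_le m n (X : 'M[R]_(m,n)) i j : `|X i j| <= frob X.
Proof.
rewrite frobE -sqrtr_sqr ler_sqrt ?ss_ge0 //.
rewrite /ss (bigD1 i) //= (bigD1 j) //= -addrA lerDl.
apply: addr_ge0; first by apply: sumr_ge0 => k _; exact: sqr_ge0.
by apply: sumr_ge0 => k _; apply: sumr_ge0 => l _; exact: sqr_ge0.
Qed.

Lemma cs_sum (I : finType) (a b : I -> R) :
  (\sum_i a i * b i) ^+ 2 <= (\sum_i a i ^+ 2) * (\sum_i b i ^+ 2).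
Proof.
set A := \sum_i a i ^+ 2; set B := \sum_i b i ^+ 2; set C := \sum_i a i * b i.
have B0 : 0 <= B by apply: sumr_ge0 => i _; exact: sqr_ge0.
have A0 : 0 <= A by apply: sumr_ge0 => i _; exact: sqr_ge0.
have [Bz|Bp] := eqVneq B 0.
  have bz : forall i, b i = 0.
    move=> i; apply/eqP; rewrite -sqrf_eq0; apply/eqP.
    by move/eqP: Bz; rewrite psumr_eq0 => [/allP/(_ i (mem_index_enum i))/eqP|j _]; [|exact: sqr_ge0].
  have -> : C = 0 by rewrite /C big1 // => i _; rewrite bz mulr0.
  by rewrite expr0n /= mulr_ge0.
have Bpos : 0 < B by rewrite lt_def Bp B0.
have key : 0 <= \sum_i (a i * B - C * b i) ^+ 2 by apply: sumr_ge0 => i _; exact: sqr_ge0.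
have e : \sum_i (a i * B - C * b i) ^+ 2 = B * (A * B - C ^+ 2).
  transitivity (\sum_i (B ^+ 2 * a i ^+ 2 - (2 * B * C) * (a i * b i) + C ^+ 2 * b i ^+ 2)).
    by apply: eq_bigr => i _; ring.
  rewrite big_split /= sumrB -!mulr_sumr -/A -/B -/C; ring.
by rewrite e pmulr_rge0 // subr_ge0 in key.
Qed.

Lemma cs_mx m n (X Y : 'M[R]_(m,n)) : mxdot X Y ^+ 2 <= ss X * ss Y.
Proof.
rewrite mxdotE /ss !pair_bigA /=.
exact: (cs_sum (fun p : 'I_m * 'I_n => X p.1 p.2) (fun p => Y p.1 p.2)).
Qed.

Lemma cs_frob m n (X Y : 'M[R]_(m,n)) : `|mxdot X Y| <= frob X * frob Y.
Proof.
rewrite !frobE -sqrtrM ?ss_ge0 // -sqrtr_sqr ler_sqrt; last by rewrite mulr_ge0 ?ss_ge0.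
exact: cs_mx.
Qed.

Lemma mxdot_le m n (X Y : 'M[R]_(m,n)) : mxdot X Y <= frob X * frob Y.
Proof. exact: le_trans (ler_norm _) (cs_frob X Y). Qed.

Lemma frobD m n (X Y : 'M[R]_(m,n)) : frob (X + Y) <= frob X + frob Y.
Proof.
rewrite -ler_sqr ?nnegrE ?addr_ge0 ?frob_ge0 // !sqrrD !frob2 mxdotDl !mxdotDr (mxdotC Y X).
have := mxdot_le X Y; lra.
Qed.

Lemma frobZ m n c (X : 'M[R]_(m,n)) : frob (c *: X) = `|c| * frob X.
Proof.
rewrite !frobE -sqrtr_sqr -sqrtrM ?sqr_ge0 //; congr Num.sqrt.
rewrite /ss mulr_sumr; apply eq_bigr => i _; rewrite mulr_sumr; apply eq_bigr => j _.
by rewrite mxE exprMn.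
Qed.

Lemma frobN m n (X : 'M[R]_(m,n)) : frob (- X) = frob X.
Proof. by rewrite -scaleN1r frobZ normrN normr1 mul1r. Qed.

Lemma frobB m n (X Y : 'M[R]_(m,n)) : frob (X - Y) = frob (Y - X).
Proof. by rewrite -frobN opprB. Qed.

Lemma frob_eq0 m n (X : 'M[R]_(m,n)) : frob X = 0 -> X = 0.
Proof.
move=> h; apply/matrixP => i j; rewrite mxE; apply/eqP; rewrite -normr_eq0 eq_le normr_ge0 andbT.
by rewrite -h entry_le.
Qed.

Lemma frob0 m n : frob (0 : 'M[R]_(m,n)) = 0.
Proof. by rewrite -(scale0r 0) frobZ normr0 mul0r. Qed.

Lemma frobM m n p (X : 'M[R]_(m,n)) (Y : 'M[R]_(n,p)) : frob (X *m Y) <= frob X * frob Y.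
Proof.
rewrite !frobE -sqrtrM ?ss_ge0 // ler_sqrt; last by rewrite mulr_ge0 ?ss_ge0.
rewrite /ss mulr_suml; apply: ler_sum => i _.
rewrite exchange_big /= mulr_sumr; apply: ler_sum => j _.
rewrite mxE; exact: (cs_sum (fun l => X i l) (fun l => Y l j)).
Qed.

Lemma mxdot_mull m n p (X : 'M[R]_(m,n)) (Y : 'M[R]_(n,p)) Z :
  mxdot (X *m Y) Z = mxdot Y (X^T *m Z).
Proof. by rewrite /mxdot trmx_mul mulmxA. Qed.

Lemma mxdot_mulr m n p (X : 'M[R]_(m,p)) (Y : 'M[R]_(m,n)) (Z : 'M[R]_(n,p)) :
  mxdot X (Y *m Z) = mxdot (X *m Z^T) Y.
Proof. by rewrite /mxdot trmx_mul trmxK mulmxA mxtrace_mulC mulmxA. Qed.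

Lemma mxdot_tr m n (X Y : 'M[R]_(m,n)) : mxdot X^T Y^T = mxdot X Y.
Proof. rewrite !mxdotE exchange_big; apply eq_bigr => i _; apply eq_bigr => j _; by rewrite !mxE. Qed.

End Basics.
Section G.
Variable R : realType.
Variables (d K : nat) (A : 'M[R]_(d, K)).

Lemma g_st Q : stiefel Q -> gfun A Q = (mxdot A Q)%:E.
Proof. by move=> h; rewrite /gfun /Defs.indic asboolT // adde0. Qed.

Lemma g_nst Q : ~ stiefel Q -> gfun A Q = +oo%E.
Proof. by move=> h; rewrite /gfun /Defs.indic asboolF. Qed.

Lemma g_fin Q : gfun A Q \is a fin_num -> stiefel Q.
Proof. by move=> h; apply/not_notP => /g_nst hn; rewrite hn in h. Qed.

Lemma frechet_normal_in Q (S : 'M[R]_K) : stiefel Q -> S^T = S ->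
  frechet_subdiff (gfun A) Q (A + Q *m S).
Proof.
move=> hQ hS; split; first by rewrite g_st.
move=> e e0; exists (2 * e / (frob S + 1)).
  by rewrite divr_gt0 ?mulr_gt0 // ltr_wpDl ?frob_ge0.
move=> Y hY; have [hYs|hYn] := pselect (stiefel Y); last by rewrite (g_nst hYn) leey.
rewrite (g_st hQ) (g_st hYs) /= lee_fin.
have [D hYD] : exists D, Y = Q + D by exists (Y - Q); rewrite addrC subrK.
subst Y; have eD : Q + D - Q = D by rewrite addrAC subrr add0r.
rewrite eD in hY *.
have key : Q^T *m D + D^T *m Q = - (D^T *m D).
  have trD : (Q + D)^T = Q^T + D^T by apply/matrixP => i j; rewrite !mxE.
  move: hYs; rewrite /stiefel /= trD !(mulmxDl, mulmxDr) hQ => /eqP.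
  rewrite -addrA -[X in _ == X]addr0 => /eqP /addrI h.
  by apply/eqP; rewrite -subr_eq0 opprK -addrA h.
have e1 : mxdot (Q *m S) D = - 2^-1 * mxdot S (D^T *m D).
  rewrite mxdot_mull.
  have e2 : mxdot S (Q^T *m D) = mxdot S (D^T *m Q).
    by rewrite -mxdot_tr hS trmx_mul trmxK.
  have : mxdot S (- (D^T *m D)) = 2 * mxdot S (Q^T *m D).
    by rewrite -key mxdotDr -e2 mulr2n mulrDl mul1r.
  rewrite mxdotNr => h.
  have -> : mxdot S (D^T *m D) = - (2 * mxdot S (Q^T *m D)) by rewrite -h opprK.
  by rewrite mulNr mulrN opprK mulrA mulVf ?mul1r // pnatr_eq0.
have b1 : `|mxdot S (D^T *m D)| <= frob S * (frob D * frob D).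
  apply: le_trans (cs_frob _ _) _; apply: ler_wpM2l; first exact: frob_ge0.
  apply: le_trans (frobM _ _) _.
  suff -> : frob D^T = frob D by [].
  by rewrite !frobE !ssE mxdot_tr.
have fD := frob_ge0 D; have fS := frob_ge0 S.
have ineq : mxdot (Q *m S) D <= e * frob D.
  rewrite e1; apply: le_trans (_ : 2^-1 * (frob S * (frob D * frob D)) <= _).
    rewrite mulNr -mulrN; apply: ler_wpM2l; first by rewrite invr_ge0.
    by apply: le_trans b1; rewrite -normrN ler_norm.
  have h1 : frob D * (frob S + 1) <= 2 * e.
    by rewrite -ler_pdivlMr ?ltr_wpDl //; exact: ltW.
  nra.
rewrite mxdotDl.
rewrite mxdotDr.
lra.
Qed.

End G.
Section Givens.
Variable R : realType.

Lemma trD n m (X Y : 'M[R]_(n,m)) : (X + Y)^T = X^T + Y^T.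
Proof. by apply/matrixP => i j; rewrite !mxE. Qed.
Lemma trZ n m c (X : 'M[R]_(n,m)) : (c *: X)^T = c *: X^T.
Proof. by apply/matrixP => i j; rewrite !mxE. Qed.
Lemma trN n m (X : 'M[R]_(n,m)) : (- X)^T = - X^T.
Proof. by apply/matrixP => i j; rewrite !mxE. Qed.

Lemma G_orth n (W P : 'M[R]_n) (s a : R) :
  W^T = - W -> P^T = P -> W *m W = - P -> W *m P = W -> P *m W = W -> P *m P = P ->
  s ^+ 2 + 2 * a + a ^+ 2 = 0 ->
  (1%:M + s *: W + a *: P)^T *m (1%:M + s *: W + a *: P) = 1%:M.
Proof.
move=> hW hP hWW hWP hPW hPP hsa.
rewrite !trD !trZ hW hP trmx1.
rewrite !(mulmxDl, mulmxDr, mul1mx, mulmx1) -!scalemxAl -!scalemxAr !mulNmx.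
rewrite hWW hWP hPW hPP.
apply/matrixP => i j; rewrite !mxE.
rewrite -[RHS]addr0 -(mulr0 (P i j)) -hsa; ring.
Qed.

Lemma mxdot_delta m n (M : 'M[R]_(m,n)) i j : mxdot M (delta_mx i j) = M i j.
Proof.
rewrite mxdotE (bigD1 i) //= (bigD1 j) //= !mxE !eqxx mulr1.
rewrite big1 ?addr0; last by move=> k /negbTE hk; rewrite !mxE eqxx hk andbF mulr0.
rewrite big1 ?addr0 //; move=> k /negbTE hk; apply: big1 => l _; rewrite !mxE hk andFb mulr0.
by [].
Qed.

End Givens.
Section Normal.
Variable R : realType.
Variables (d K : nat) (A : 'M[R]_(d,K)).

Definition Wg (i j : 'I_d) : 'M[R]_d := delta_mx i j - delta_mx j i.
Definition Pg (i j : 'I_d) : 'M[R]_d := delta_mx i i + delta_mx j j.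

Lemma Wg_props i j : i != j ->
  (Wg i j)^T = - Wg i j /\ (Pg i j)^T = Pg i j /\ Wg i j *m Wg i j = - Pg i j /\
      Wg i j *m Pg i j = Wg i j /\ Pg i j *m Wg i j = Wg i j /\ Pg i j *m Pg i j = Pg i j.
Proof.
move=> ij; have ji : j != i by rewrite eq_sym.
rewrite /Wg /Pg !trD !trN !trmx_delta.
rewrite !(mulmxDl, mulmxDr, mulmxBl, mulmxBr, mulNmx, mulmxN, mul_delta_mx_cond) !eqxx (negbTE ij) (negbTE ji) /=.
by do !split; apply/matrixP => a b; rewrite !mxE /=; ring.
Qed.

Lemma frechet_normal X W : stiefel X -> frechet_subdiff (gfun A) X W ->
  ((W - A) *m X^T)^T = (W - A) *m X^T.
Proof.
move=> hX [_ hF].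
set N := W - A; set M := N *m X^T.
have hP : forall e, 0 < e -> exists2 dl, 0 < dl & forall Y, stiefel Y ->
    frob (Y - X) < dl -> mxdot N (Y - X) <= e * frob (Y - X).
  move=> e e0; have [dl dl0 hdl] := hF e e0; exists dl => // Y hY hYX.
  have := hdl Y hYX; rewrite (g_st A hX) (g_st A hY) /= lee_fin.
  rewrite /N mxdotBl mxdotBr; lra.
have key : forall i j : 'I_d, i != j -> M i j - M j i <= 0.
  move=> i j ij; rewrite leNgt; apply/negP => b0.
  set b := M i j - M j i in b0.
  have [hW [hPt [hWW [hWP [hPW hPP]]]]] := Wg_props ij.
  set f1 := frob (Wg i j *m X); set f2 := frob (Pg i j *m X).
  set c := mxdot N (Pg i j *m X).
  have f10 : 0 <= f1 := frob_ge0 _.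
  have f20 : 0 <= f2 := frob_ge0 _.
  set C0 := f1 + f2; set C1 := `|c|.
  have C10 : 0 <= C1 := normr_ge0 _.
  have C00 : 0 <= C0 by rewrite addr_ge0.
  have q0 : 0 < 4 * (C0 + 1) by rewrite mulr_gt0 // ltr_wpDl.
  have q1 : 0 < 8 * (C1 + 1) by rewrite mulr_gt0 // ltr_wpDl.
  have [dl dl0 hdl] := hP (b / (4 * (C0 + 1))) (divr_gt0 b0 q0).
  set e := b / (4 * (C0 + 1)) in hdl.
  have he : e * (4 * (C0 + 1)) = b by rewrite /e divfK // gt_eqF.
  have e0 : 0 < e by rewrite /e divr_gt0.
  set t := Num.min 1 (Num.min (dl / (4 * (C0 + 1))) (b / (8 * (C1 + 1)))).
  have t0 : 0 < t by rewrite !lt_min ltr01 !divr_gt0.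
  have ht1 : t <= 1 by rewrite ge_min lexx.
  have ht2 : t * (4 * (C0 + 1)) <= dl.
    by rewrite -ler_pdivlMr // /t !ge_min lexx orbT.
  have ht3 : t * (8 * (C1 + 1)) <= b.
    by rewrite -ler_pdivlMr // /t !ge_min lexx !orbT.
  set u := 1 + t ^+ 2.
  have u0 : 0 < u by rewrite ltr_pwDl // exprn_ge0 // ltW.
  have u1 : 1 <= u by rewrite lerDl sqr_ge0.
  set s := 2 * t / u; set a := - (2 * t ^+ 2) / u.
  have hs : s * u = 2 * t by rewrite /s divfK // gt_eqF.
  have ha : a * u = - (2 * t ^+ 2) by rewrite /a divfK // gt_eqF.
  have s0 : 0 <= s by nra.
  have a0 : a <= 0 by nra.
  have hsa : s ^+ 2 + 2 * a + a ^+ 2 = 0.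
    have e1 : (s ^+ 2 + 2 * a + a ^+ 2) * u ^+ 2 = (s*u)^+2 + 2*(a*u)*u + (a*u)^+2 by ring.
    rewrite hs ha /u in e1.
    have : (s ^+ 2 + 2 * a + a ^+ 2) * u ^+ 2 = 0 by rewrite e1; ring.
    by move/eqP; rewrite mulf_eq0 expf_eq0 (gt_eqF u0) andbF orbF => /eqP.
  set Y := (1%:M + s *: Wg i j + a *: Pg i j) *m X.
  have hY : stiefel Y.
    by rewrite /stiefel /= /Y trmx_mul mulmxA -(mulmxA X^T) G_orth // mulmx1.
  have hYX : Y - X = s *: (Wg i j *m X) + a *: (Pg i j *m X).
    by rewrite /Y -addrA mulmxDl mul1mx mulmxDl -!scalemxAl addrAC subrr add0r.
  have hfr : frob (Y - X) <= s * f1 + (- a) * f2.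
    rewrite hYX; apply: le_trans (frobD _ _) _; rewrite !frobZ ger0_norm // ler0_norm //.
  have hd : mxdot N (Y - X) = s * b + a * c.
    rewrite hYX mxdotDr !mxdotZr; congr (_ * _ + _).
    by rewrite mxdot_mulr -/M /Wg mxdotBr !mxdot_delta.
  have hsl : s <= 2 * t by rewrite -hs ler_peMr.
  have hal : - a <= 2 * t.
    apply: le_trans (_ : - a * u <= _); first by rewrite ler_peMr // oppr_ge0.
    by rewrite mulNr ha opprK; nra.
  have hfr2 : frob (Y - X) <= 2 * t * C0.
    apply: le_trans hfr _; rewrite /C0; nra.
  have hlt : frob (Y - X) < dl.
    apply: le_lt_trans hfr2 _; nra.
  have := hdl Y hY hlt; rewrite hd => hineq.
  have h2 : s * b + a * c <= e * (s * f1 + (- a) * f2).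
    apply: le_trans hineq _; apply: ler_wpM2l => //; exact: ltW.
  have h3 : (s * b + a * c) * u <= (e * (s * f1 + (- a) * f2)) * u.
    by rewrite ler_wpM2r // ltW.
  have h4 : 2 * t * b - 2 * t ^+ 2 * c <= e * (2 * t * f1 + 2 * t ^+ 2 * f2).
    have e1 : (s*b + a*c)*u = (s*u)*b + (a*u)*c by ring.
    have e2 : e*(s*f1 + -a*f2)*u = e*((s*u)*f1 - (a*u)*f2) by ring.
    rewrite e1 e2 hs ha in h3.
    have e3 : e * (2 * t * f1 - - (2 * t ^+ 2) * f2) = e * (2 * t * f1 + 2 * t ^+ 2 * f2) by ring.
    have e4 : 2 * t * b + - (2 * t ^+ 2) * c = 2 * t * b - 2 * t ^+ 2 * c by ring.
    by rewrite -e3 -e4.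
  have h5 : b - t * c <= e * (f1 + t * f2).
    have : 2 * t * (b - t * c) <= 2 * t * (e * (f1 + t * f2)) by nra.
    by rewrite ler_pM2l // mulr_gt0.
  have hc : t * c <= t * C1 by rewrite ler_pM2l // ler_norm.
  have h6 : e * (f1 + t * f2) <= e * C0.
    rewrite ler_pM2l // /C0 lerD2l; nra.
  nra.
apply/matrixP => i j; rewrite mxE.
have [<-|ij] := eqVneq i j; first by [].
have h1 := key i j ij; have h2 := key j i; rewrite eq_sym ij in h2.
have := h2 isT; lra.
Qed.

End Normal.
Section Limits.
Variable R : realType.

Lemma cvg_uniqR (u : nat -> R) (a b : R) : u @ \oo --> a -> u @ \oo --> b -> a = b.
Proof. move=> h1 h2; exact: (cvg_unique (@Rhausdorff R) h1 h2). Qed.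

Lemma cvg_dom (u v : nat -> R) (l : R) : (forall k, `|u k - l| <= v k) ->
  v @ \oo --> 0 -> u @ \oo --> l.
Proof.
move=> h hv; apply: (@squeeze_cvgr _ _ _ _ (fun k => l - v k) (fun k => l + v k)).
- by near=> k; have := h k; rewrite ler_norml; move=> /andP[h1 h2]; apply/andP; split; lra.
- by rewrite -[X in _ --> X]subr0; apply: cvgB => //; exact: cvg_cst.
- by rewrite -[X in _ --> X]addr0; apply: cvgD => //; exact: cvg_cst.
Unshelve. all: end_near.
Qed.

Lemma cvg_sumR (I : finType) (f : I -> nat -> R) (l : I -> R) :
  (forall i, f i @ \oo --> l i) -> (fun k => \sum_i f i k) @ \oo --> \sum_i l i.
Proof.
move=> h; apply: (@cvg_big R I +%R 0 xpredT add_continuous nat \oo (index_enum I) f l) => //.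
Qed.

End Limits.

Section Limiting.
Variable R : realType.
Variables (d K : nat) (A : 'M[R]_(d,K)).

Lemma limiting_normal Q V : limiting_subdiff (gfun A) Q V ->
  stiefel Q /\ ((V - A) *m Q^T)^T = (V - A) *m Q^T.
Proof.
move=> [hfin [Xs [Vs [hF [hX [_ hV]]]]]].
split; first exact: g_fin hfin.
have hXk k : stiefel (Xs k) by exact: g_fin (hF k).1.
have hsym k := frechet_normal (hXk k) (hF k).
have cX i j : (fun k => Xs k i j) @ \oo --> Q i j.
  apply: (cvg_dom (v := fun k => frob (Xs k - Q))); last exact: hX.
  move=> k.
  by have := entry_le (Xs k - Q) i j; rewrite !mxE.
have cV i j : (fun k => Vs k i j) @ \oo --> V i j.
  apply: (cvg_dom (v := fun k => frob (Vs k - V))); last exact: hV.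
  move=> k.
  by have := entry_le (Vs k - V) i j; rewrite !mxE.
have cM i j : (fun k => ((Vs k - A) *m (Xs k)^T) i j) @ \oo --> ((V - A) *m Q^T) i j.
  under eq_cvg do rewrite mxE.
  rewrite mxE; apply: cvg_sumR => l.
  under eq_cvg do rewrite !mxE.
  rewrite !mxE; apply: cvgM; last exact: cX.
  by apply: cvgB; [exact: cV | exact: cvg_cst].
apply/matrixP => i j; rewrite mxE.
apply: (cvg_uniqR (cM j i)).
have e : (fun k => ((Vs k - A) *m (Xs k)^T) j i) = (fun k => ((Vs k - A) *m (Xs k)^T) i j).
  by apply: funext => k; move/matrixP: (hsym k) => /(_ i j); rewrite mxE.
by rewrite e; exact: cM.
Qed.

End Limiting.
Section Main.
Variable R : realType.
Variables (d K : nat) (A : 'M[R]_(d,K)).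

Definition Sst (Q : 'M[R]_(d,K)) : 'M[R]_K := - 2^-1 *: (A^T *m Q + Q^T *m A).

Lemma Sst_sym Q : (Sst Q)^T = Sst Q.
Proof. by rewrite /Sst trZ trD !trmx_mul !trmxK addrC. Qed.

Lemma QtQX n (Q : 'M[R]_(d,K)) (X : 'M[R]_(K,n)) : stiefel Q -> Q^T *m (Q *m X) = X.
Proof. by move=> hQ; rewrite mulmxA hQ mul1mx. Qed.

Lemma vstar_eq Q : stiefel Q ->
  (1%:M - 2^-1 *: (Q *m Q^T)) *m (A - Q *m A^T *m Q) = A + Q *m Sst Q.
Proof.
move=> hQ.
have e : Q *m Q^T *m (Q *m A^T *m Q) = Q *m A^T *m Q by rewrite -!mulmxA QtQX.
rewrite mulmxBl mul1mx -scalemxAl mulmxBr e.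
rewrite /Sst -scalemxAr mulmxDr !mulmxA.
move: (Q *m A^T *m Q) (Q *m Q^T *m A) => X1 X2.
apply/matrixP => i j; rewrite !mxE; by field.
Qed.

Lemma vstar_in Q : stiefel Q ->
  limiting_subdiff (gfun A) Q ((1%:M - 2^-1 *: (Q *m Q^T)) *m (A - Q *m A^T *m Q)).
Proof.
move=> hQ; split; first by rewrite g_st.
exists (fun=> Q), (fun=> (1%:M - 2^-1 *: (Q *m Q^T)) *m (A - Q *m A^T *m Q)).
split; first by move=> k; rewrite vstar_eq //; apply: frechet_normal_in => //; exact: Sst_sym.
rewrite subrr frob0; split; first exact: cvg_cst.
split; first exact: cvg_cst.
rewrite subrr frob0; exact: cvg_cst.
Qed.

Lemma vstar_min Q V : limiting_subdiff (gfun A) Q V ->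
  frob ((1%:M - 2^-1 *: (Q *m Q^T)) *m (A - Q *m A^T *m Q)) <= frob V.
Proof.
move=> hV; have [hQ hN] := limiting_normal hV.
rewrite vstar_eq //.
set Vs := A + Q *m Sst Q.
set D := V - Vs.
have hD : (D *m Q^T)^T = D *m Q^T.
  rewrite /D /Vs opprD addrA mulmxBl trD trN hN.
  by rewrite trmx_mul trmxK trmx_mul Sst_sym mulmxA.
have hD2 : D = Q *m D^T *m Q.
  by rewrite -[D in LHS]mulmx1 -hQ mulmxA -hD trmx_mul trmxK.
have hZ : (D^T *m Q)^T = D^T *m Q.
  by rewrite trmx_mul trmxK {1}hD2 -mulmxA QtQX // trmx_mul trmxK.
have hK : (Q^T *m Vs)^T = - (Q^T *m Vs).
  rewrite /Vs mulmxDr QtQX // trD Sst_sym trmx_mul trmxK /Sst.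
  move: (A^T *m Q) => X; apply/matrixP => i j; rewrite !mxE; by field.
have orth : mxdot Vs D = 0.
  rewrite hD2 -mulmxA mxdotC mxdot_mull.
  have : mxdot (D^T *m Q) (Q^T *m Vs) = - mxdot (D^T *m Q) (Q^T *m Vs).
    by rewrite -[LHS]mxdot_tr hZ hK mxdotNr.
  move=> h; lra.
have hVV : V = Vs + D by rewrite /D addrC subrK.
clearbody D Vs.
rewrite -ler_sqr ?nnegrE ?frob_ge0 // !frob2 hVV mxdotDl !mxdotDr orth (mxdotC D Vs) orth.
have := frob2 D; have := frob_ge0 D; nra.
Qed.

End Main.
Section Bounds.
Variable R : realType.
Variables (d K : nat).

Lemma M_bounds (Q X : 'M[R]_(d,K)) : stiefel Q ->
  2^-1 * frob X <= frob ((1%:M - 2^-1 *: (Q *m Q^T)) *m X) /\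
  frob ((1%:M - 2^-1 *: (Q *m Q^T)) *m X) <= frob X.
Proof.
move=> hQ.
have eM : (1%:M - 2^-1 *: (Q *m Q^T)) *m X = (X - Q *m (Q^T *m X)) + 2^-1 *: (Q *m (Q^T *m X)).
  rewrite mulmxBl mul1mx -scalemxAl -mulmxA.
  move: (Q *m (Q^T *m X)) => Y; apply/matrixP => i j; rewrite !mxE; by field.
have eX : X = (X - Q *m (Q^T *m X)) + (Q *m (Q^T *m X)) by rewrite subrK.
have orth : mxdot (X - Q *m (Q^T *m X)) (Q *m (Q^T *m X)) = 0.
  rewrite mxdotC mxdot_mull mulmxBr QtQX // subrr.
  by rewrite /mxdot mulmx0 linear0.
rewrite eM; move: orth eX.
set P2 := Q *m (Q^T *m X); set P1 := X - P2; clearbody P1 P2 => orth ->.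
have e1 : frob (P1 + P2) ^+ 2 = frob P1 ^+ 2 + frob P2 ^+ 2.
  by rewrite !frob2 mxdotDl !mxdotDr (mxdotC P2 P1) orth; ring.
have e2 : frob (P1 + 2^-1 *: P2) ^+ 2 = frob P1 ^+ 2 + 4^-1 * frob P2 ^+ 2.
  rewrite !frob2 mxdotDl !mxdotDr !mxdotZl !mxdotZr (mxdotC P2 P1) orth.
  have -> : (4 : R)^-1 = 2^-1 * 2^-1 by field.
  ring.
have f1 := frob_ge0 P1; have f2 := frob_ge0 P2.
have f3 := frob_ge0 (P1 + P2); have f4 := frob_ge0 (P1 + 2^-1 *: P2).
split.
  rewrite -ler_sqr ?nnegrE ?mulr_ge0 ?invr_ge0 // e2 exprMn e1.
  have -> : (2 : R)^-1 ^+ 2 = 4^-1 by field.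
  have : 0 <= frob P1 ^+ 2 := sqr_ge0 _.
  lra.
rewrite -ler_sqr ?nnegrE // e2 e1.
have : 0 <= frob P2 ^+ 2 := sqr_ge0 _.
lra.
Qed.

End Bounds.
Theorem proposition1 (R : realType) (d K : nat) (hKd : (K <= d)%N)
    (A : 'M[R]_(d, K)) :
  (forall Q : 'M[R]_(d, K), stiefel Q ->
     let RQ := A - Q *m A^T *m Q in
     dist0 (limiting_subdiff (gfun A) Q)
       = (frob ((1%:M - 2^-1 *: (Q *m Q^T)) *m RQ))%:E /\
     ((2^-1 * frob RQ)%:E <= dist0 (limiting_subdiff (gfun A) Q))%E /\
     (dist0 (limiting_subdiff (gfun A) Q) <= (frob RQ)%:E)%E) /\
  (forall Q : 'M[R]_(d, K),
     limiting_subdiff (gfun A) Q 0 <-> stiefel Q /\ A - Q *m A^T *m Q = 0).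
Proof.
split.
  move=> Q hQ RQ.
  have hdist : dist0 (limiting_subdiff (gfun A) Q) =
      (frob ((1%:M - 2^-1 *: (Q *m Q^T)) *m RQ))%:E.
    apply/eqP; rewrite eq_le; apply/andP; split.
      apply: ge_ereal_inf; exists (frob ((1%:M - 2^-1 *: (Q *m Q^T)) *m RQ))%:E => //.
      by exists ((1%:M - 2^-1 *: (Q *m Q^T)) *m RQ) => //; exact: vstar_in.
    apply/ereal_infP => _ [V hV <-]; rewrite lee_fin; exact: vstar_min.
  have [b1 b2] := M_bounds RQ hQ.
  by rewrite hdist !lee_fin; split.
move=> Q; split.
  move=> h; have [hQ hN] := limiting_normal h.
  split => //.
  move: hN; rewrite sub0r mulNmx trN => /oppr_inj.
  rewrite trmx_mul !trmxK => hN.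
  apply/eqP; rewrite subr_eq0; apply/eqP.
  by rewrite hN -mulmxA hQ mulmx1.
move=> [hQ h0].
by have := vstar_in A hQ; rewrite h0 mulmx0.
Qed.
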